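(* Let $X$ be a finite connected simplicial complex and $\delta$ a cellular perversity. (1) The left quadratic dual of the quadratic algebra $A(X,\delta)$ is isomorphic to $B(X,-\delta)$. (2) The left quadratic dual of $B(X,\delta)$ is isomorphic to $A(X,-\delta)$.
   Context: Simplices are open; $\Delta\leftrightarrow\Delta'$ means one is a face of the other. Cellular perversity: $\delta:\mathbb Z_{\ge0}\to\mathbb Z$, $\delta(0)=0$, bijective from each $\{0,\dots,k\}$ onto an interval $\{a,\dots,a+k\}$, $a\le0$ (then $-\delta$ is also one); $\delta(\Delta)=\delta(\dim\Delta)$. For a cellular perversity $\varepsilon$, the quiver $Q(X,\varepsilon)$ has vertices the simplices and an arrow $\Delta\to\Delta'$ whenever $\Delta\leftrightarrow\Delta'$ and $\varepsilon(\Delta)=\varepsilon(\Delta')+1$ (so $Q(X,-\delta)$ is $Q(X,\delta)$ with arrows reversed). In the path algebra over a field $\mathbb F$ (char $0$), products $xy$ mean path $y$ followed by $x$. $A(X,\varepsilon)$ is the quotient by the relations $\sum_{\Delta:\varepsilon(\Delta)=k,\ \Delta'\leftrightarrow\Delta\leftrightarrow\Delta''}a(\Delta,\Delta'')a(\Delta',\Delta)=0$ for all $\Delta',\Delta''$ with $\varepsilon(\Delta')=k+1$, $\varepsilon(\Delta'')=k-1$; $B(X,\varepsilon)$ is the quotient by $b(\Delta_1,\Delta'')b(\Delta',\Delta_1)=b(\Delta_2,\Delta'')b(\Delta',\Delta_2)$ whenever $\varepsilon(\Delta')=k+1$, $\varepsilon(\Delta_j)=k$, $\varepsilon(\Delta'')=k-1$,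 $\Delta'\leftrightarrow\Delta_j\leftrightarrow\Delta''$. Both are quadratic algebras over the semisimple algebra $k=\bigoplus_\Delta\mathbb F e(\Delta)$; the left quadratic dual of $T_k(V)/(R)$, $R\subseteq V\otimes_kV$, is $T_k(V^* )/(R^\perp)$ (in the sense of Beilinson–Ginzburg–Soergel). *)

(* Defs.v *)
From HB Require Import structures.
From mathcomp Require Import all_boot all_order all_algebra.
Set Implicit Arguments. Unset Strict Implicit. Unset Printing Implicit Defensive.
Import Order.TTheory GRing.Theory Num.Theory.
Local Open Scope ring_scope.

(* Quadratic algebras over k = (+)_{s : S} F e(s), presented by a quiver
   with at most one arrow between two vertices (arrow relation [arr]) and
   a set of quadratic relations.  Everything is graded: the degree-n part
   of the path algebra T_k(V) is the space of functions on the paths with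
   n arrows; a path is recorded as the sequence of its n+1 vertices in
   traversal order. *)
Section Quadratic.
Variables (F : fieldType) (S : finType).

Local Notation word n := {ffun 'I_n.+1 -> S}.
Local Notation deg n := {ffun word n -> F}.

Definition is_path (arr : rel S) (n : nat) (w : word n) : bool :=
  [forall i : 'I_n, arr (w (inord i)) (w (inord i.+1))].

Definition in_T (arr : rel S) (n : nat) (x : deg n) : Prop :=
  forall w : word n, ~~ is_path arr w -> x w = 0.

Definition subword (n : nat) (w : word n) (i m : nat) : word m :=
  [ffun k : 'I_m.+1 => w (inord (i + k))].

(* product x y in the path algebra: "path y followed by path x" *)
Definition qmul (m n : nat) (x : deg m) (y : deg n) : deg (m + n) :=
  [ffun w : word (m + n) => x (subword w n m) * y (subword w 0 n)].

Definition rev_word (n : nat) (w : word n) : word n :=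
  [ffun k : 'I_n.+1 => w (rev_ord k)].

(* quadratic data: quiver + generating set of the relation space R ⊆ V⊗_k V *)
Record qalg := QAlg { qarr : rel S; qrel : deg 2 -> Prop }.

(* generators u r v (v, then r, then u) of the degree-N part of the
   two-sided ideal (R) *)
Definition ideal_gen (Q : qalg) (N : nat) (x : deg N) : Prop :=
  exists (i j : nat) (u : deg i) (r : deg 2) (v : deg j),
    [/\ (j + 2 + i)%N = N, in_T (qarr Q) u, in_T (qarr Q) v, qrel Q r &
        forall w : word N,
          x w = u (subword w (j + 2) i) * r (subword w j 2) * v (subword w 0 j)].

Definition in_ideal (Q : qalg) (N : nat) (x : deg N) : Prop :=
  exists s : seq (deg N),
    (forall g, g \in s -> ideal_gen Q g) /\ x = \sum_(g <- s) g.

(* left quadratic dual T_k(V^* )/(R^perp): V^* has the reversed arrows, and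
   a 2-path of the reversed quiver pairs with the reversed 2-path of Q *)
Definition qdual (Q : qalg) : qalg :=
  QAlg (fun a b => qarr Q b a)
       (fun y => in_T (fun a b => qarr Q b a) y /\
                 forall r, qrel Q r -> \sum_(w : word 2) y (rev_word w) * r w = 0).

(* isomorphism of graded k-algebras T_k(V1)/(R1) ~= T_k(V2)/(R2),
   restricting to the identity on k (degree 0), given by linear maps
   f n on the degree-n parts of the path algebras inducing bijections of
   the degree-n quotients and compatible with products *)
Definition qiso (Q1 Q2 : qalg) : Prop :=
  exists f : forall n, deg n -> deg n,
  [/\ (forall n (a : F) (x y : deg n), f n [ffun w => a * x w + y w] = [ffun w => a * f n x w + f n y w]),
      (forall x : deg 0, f 0%N x = x),
      (forall n (x : deg n), in_T (qarr Q1) x -> in_T (qarr Q2) (f n x)),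
      (forall n (x : deg n), in_T (qarr Q1) x ->
        (in_ideal Q1 x <-> in_ideal Q2 (f n x))) &
      (forall n (y : deg n), in_T (qarr Q2) y ->
        exists2 x, in_T (qarr Q1) x & in_ideal Q2 (f n x - y)) /\
      (forall m n (x : deg m) (y : deg n), in_T (qarr Q1) x -> in_T (qarr Q1) y ->
        in_ideal Q2 (f (m + n)%N (qmul x y) - qmul (f m x) (f n y)))].

End Quadratic.

Notation word S n := {ffun 'I_n.+1 -> S}.
Notation deg F S n := {ffun word S n -> F}.

Section Complex.
Variable V : finType.

Definition simplicial_complex (X : {set {set V}}) : Prop :=
  set0 \notin X /\
  forall s t : {set V}, s \in X -> t \subset s -> t != set0 -> t \in X.

Definition connected_complex (X : {set {set V}}) : Prop :=
  forall u v : V, [set u] \in X -> [set v] \in X ->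
    connect [rel a b | [set a; b] \in X] u v.

Definition simplex (X : {set {set V}}) := {s : {set V} | s \in X}.

Definition sdim (X : {set {set V}}) (D : simplex X) : nat := (#|val D|).-1.

Definition face_rel (X : {set {set V}}) (D D' : simplex X) : bool :=
  (val D \proper val D') || (val D' \proper val D).

Definition Qarr (X : {set {set V}}) (e : nat -> int) : rel (simplex X) :=
  fun D D' => face_rel D D' && (e (sdim D) == e (sdim D') + 1).

Definition word3 (X : {set {set V}}) (a b c : simplex X) : word (simplex X) 2 :=
  [ffun k : 'I_3 => nth a [:: a; b; c] k].

(* relations of A(X,e): for D', D'' with e(D') = k+1, e(D'') = k-1,
   sum over D with e(D) = k and D' <-> D <-> D'' of a(D,D'') a(D',D) *)
Definition A_rel (F : fieldType) (X : {set {set V}}) (e : nat -> int)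
    (r : {ffun word (simplex X) 2 -> F}) : Prop :=
  exists (a c : simplex X) (k : int),
    [/\ e (sdim a) = k + 1, e (sdim c) = k - 1 &
        forall w : word (simplex X) 2,
          r w = if [&& w ord0 == a, w (@ord_max 2) == c,
                      e (sdim (w (inord 1))) == k,
                      face_rel a (w (inord 1)) & face_rel (w (inord 1)) c]
                then 1 else 0].

(* relations of B(X,e): b(D1,D'')b(D',D1) - b(D2,D'')b(D',D2) *)
Definition B_rel (F : fieldType) (X : {set {set V}}) (e : nat -> int)
    (r : {ffun word (simplex X) 2 -> F}) : Prop :=
  exists (a b1 b2 c : simplex X) (k : int),
    [/\ e (sdim a) = k + 1, e (sdim b1) = k /\ e (sdim b2) = k, e (sdim c) = k - 1,
        [&& face_rel a b1, face_rel b1 c, face_rel a b2 & face_rel b2 c] &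
        forall w, r w = (w == word3 a b1 c)%:R - (w == word3 a b2 c)%:R].

Definition A_alg (F : fieldType) (X : {set {set V}}) (e : nat -> int)
  : qalg F (simplex X) := QAlg (Qarr e) (@A_rel F X e).

Definition B_alg (F : fieldType) (X : {set {set V}}) (e : nat -> int)
  : qalg F (simplex X) := QAlg (Qarr e) (@B_rel F X e).

End Complex.

Definition cellular_perversity (d : nat -> int) : Prop :=
  d 0%N = 0 /\
  forall k : nat, exists a : int, a <= 0 /\
    perm_eq [seq d i | i <- iota 0 k.+1] [seq a + (i%:Z) | i <- iota 0 k.+1].

(* Main.v *)
Require Import Defs.
From HB Require Import structures.
From mathcomp Require Import all_boot all_order all_algebra.
From mathcomp Require Import zify ring.
Set Implicit Arguments. Unset Strict Implicit. Unset Printing Implicit Defensive.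
Import GRing.Theory.
Local Open Scope ring_scope.

Section Gen.
Variables (F : fieldType) (S : finType).

Lemma in_ideal0 (Q : qalg F S) N : in_ideal Q (0 : deg F S N).
Proof. by exists [::]; rewrite big_nil. Qed.

Lemma in_idealD (Q : qalg F S) N (x y : deg F S N) :
  in_ideal Q x -> in_ideal Q y -> in_ideal Q (x + y).
Proof.
move=> [s [Hs ->]] [t [Ht ->]]; exists (s ++ t); split; last by rewrite big_cat.
by move=> g; rewrite mem_cat => /orP [/Hs|/Ht].
Qed.

Lemma in_ideal_sum (Q : qalg F S) N (I : eqType) (s : seq I) (G : I -> deg F S N) :
  (forall g, g \in s -> in_ideal Q (G g)) -> in_ideal Q (\sum_(g <- s) G g).
Proof.
elim: s => [|g s IH] H; first by rewrite big_nil; apply: in_ideal0.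
rewrite big_cons; apply: in_idealD; first by apply: H; rewrite inE eqxx.
by apply: IH => h hs; apply: H; rewrite inE hs orbT.
Qed.

Lemma in_T_eq (a1 a2 : rel S) N (x : deg F S N) :
  (forall a b, a1 a b = a2 a b) -> in_T a1 x -> in_T a2 x.
Proof.
move=> E H w Hw; apply: H; rewrite /is_path.
by under eq_forallb => i do rewrite E.
Qed.

Lemma ideal_transfer (Q1 Q2 : qalg F S) :
  (forall a b, qarr Q1 a b = qarr Q2 a b) ->
  (forall r, qrel Q1 r -> exists s : seq (F * deg F S 2),
      (forall p, p \in s -> qrel Q2 p.2) /\ forall w, r w = \sum_(p <- s) p.1 * p.2 w) ->
  forall N (x : deg F S N), in_ideal Q1 x -> in_ideal Q2 x.
Proof.
move=> E HR N x [s [Hs ->]]; apply: in_ideal_sum => g /Hs [i [j [u [r [v [HN Hu Hv Hr Hg]]]]]].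
have [t [Ht Hrt]] := HR r Hr.
have -> : g = \sum_(p <- t) [ffun w : word S N => (p.1 * u (subword w (j + 2) i)) * p.2 (subword w j 2) * v (subword w 0 j)].
  apply/ffunP => w; rewrite sum_ffunE Hg Hrt mulr_sumr mulr_suml.
  by apply: eq_bigr => p _; rewrite ffunE; ring.
apply: in_ideal_sum => p Hp.
eexists [:: _]; split; last by rewrite big_seq1.
move=> h; rewrite inE => /eqP ->.
exists i, j, [ffun z => p.1 * u z], p.2, v; split => //.
- by move=> w Hw; rewrite ffunE (in_T_eq E Hu) ?mulr0 // /is_path; under eq_forallb => k do rewrite E.
- exact: in_T_eq E Hv.
- exact: Ht.
- by move=> w; rewrite !ffunE.
Qed.

Lemma qiso_id (Q1 Q2 : qalg F S) :
  (forall a b, qarr Q1 a b = qarr Q2 a b) ->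
  (forall N (x : deg F S N), in_ideal Q1 x -> in_ideal Q2 x) ->
  (forall N (x : deg F S N), in_ideal Q2 x -> in_ideal Q1 x) ->
  qiso Q1 Q2.
Proof.
move=> E H12 H21; exists (fun n x => x); split => //.
- by move=> n x; apply: in_T_eq.
- by move=> n x _; split; [apply: H12 | apply: H21].
- split.
  + by move=> n y Hy; exists y; [apply: in_T_eq Hy => a b; rewrite E | rewrite subrr; apply: in_ideal0].
  + by move=> m n x y _ _; rewrite subrr; apply: in_ideal0.
Qed.

End Gen.

Section Cx.
Variables (F : fieldType) (V : finType) (X : {set {set V}}).
Local Notation S := (simplex X).
Local Notation W := (word S 2).

Lemma w3_0 (a b c : S) : word3 a b c ord0 = a. Proof. by rewrite ffunE. Qed.
Lemma w3_1 (a b c : S) : word3 a b c (inord 1) = b. Proof. by rewrite ffunE inordK. Qed.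
Lemma w3_2 (a b c : S) : word3 a b c ord_max = c. Proof. by rewrite ffunE. Qed.

Lemma word3_eta (w : W) : w = word3 (w ord0) (w (inord 1)) (w ord_max).
Proof.
apply/ffunP => i; rewrite ffunE; case: i => [[|[|[|//]]] Hi] /=; congr (w _); apply: val_inj => //=.
by rewrite inordK.
Qed.

Lemma rev_word3 (a b c : S) : rev_word (word3 a b c) = word3 c b a.
Proof. by apply/ffunP => i; rewrite !ffunE; case: i => [[|[|[|//]]] Hi]. Qed.

Lemma rev_wordK : involutive (@rev_word S 2).
Proof. by move=> w; apply/ffunP => i; rewrite !ffunE rev_ordK. Qed.

Lemma is_path2 (arr : rel S) (w : W) :
  is_path arr w = arr (w ord0) (w (inord 1)) && arr (w (inord 1)) (w ord_max).
Proof.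
have e0 : (inord 0 : 'I_3) = ord0 by apply: val_inj; rewrite /= inordK.
have e2 : (inord 2 : 'I_3) = ord_max by apply: val_inj; rewrite /= inordK.
apply/forallP/andP => [H | [H1 H2] i].
  by split; [move: (H ord0) | move: (H ord_max)]; rewrite /= ?e0 ?e2.
by case: i => [[|[|//]] Hi] /=; rewrite ?e0 ?e2.
Qed.

Lemma face_sym (a b : S) : face_rel a b = face_rel b a.
Proof. by rewrite /face_rel orbC. Qed.

Lemma sum_delta (f : W -> F) (w0 : W) : \sum_w f w * (w == w0)%:R = f w0.
Proof.
rewrite (bigD1 w0) //= eqxx mulr1 big1 ?addr0 // => w /negbTE ->; by rewrite mulr0.
Qed.

Lemma sum_deltaB (f : W -> F) (w1 w2 : W) :
  \sum_w f w * ((w == w1)%:R - (w == w2)%:R) = f w1 - f w2.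
Proof. by rewrite (eq_bigr (fun w => f w * (w == w1)%:R - f w * (w == w2)%:R)) ?sumrB ?sum_delta // => w _; rewrite mulrBr. Qed.

Lemma sum_ind (Q c : pred W) (f : W -> F) :
  \sum_(w | Q w) f w * (if c w then 1 else 0) = \sum_(w | Q w && c w) f w.
Proof.
rewrite [RHS]big_mkcondr /=; apply: eq_bigr => w _; case: (c w); by rewrite ?mulr1 ?mulr0.
Qed.

Lemma reindex_rev (f g : W -> F) : \sum_w f (rev_word w) * g w = \sum_w f w * g (rev_word w).
Proof. by rewrite (reindex_inj (inv_inj rev_wordK)); apply: eq_bigr => w _; rewrite rev_wordK. Qed.

Lemma A_rel_mid (e : nat -> int) (r : deg F S 2) (x b1 b2 z : S) :
  A_rel e r -> face_rel x b1 -> face_rel b1 z -> face_rel x b2 -> face_rel b2 z ->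
  e (sdim b1) = e (sdim b2) -> r (word3 x b1 z) = r (word3 x b2 z).
Proof.
move=> [a [c [k [_ _ Hr]]]] f1 f2 f3 f4 E.
rewrite !Hr !w3_0 !w3_1 !w3_2 E.
case: eqP => [<-|] //=; case: eqP => [<-|] //=; by rewrite f1 f2 f3 f4.
Qed.

Variable d : nat -> int.
Local Notation e := (fun n => - d n).
Definition P (w : W) := is_path (Qarr e) w.

Lemma Qarr_dual (a b : S) : Qarr d b a = Qarr e a b.
Proof.
rewrite /Qarr face_sym; congr (_ && _); apply/eqP/eqP => /= h; lia.
Qed.

Lemma in_T_dual N (y : deg F S N) : in_T (fun a b => Qarr d b a) y -> in_T (Qarr e) y.
Proof. by apply: in_T_eq => a b; rewrite Qarr_dual. Qed.

Lemma in_T_dual' N (y : deg F S N) : in_T (Qarr e) y -> in_T (fun a b => Qarr d b a) y.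
Proof. by apply: in_T_eq => a b; rewrite Qarr_dual. Qed.

Lemma P3 (a b c : S) : P (word3 a b c) =
  [&& face_rel a b, - d (sdim a) == - d (sdim b) + 1, face_rel b c & - d (sdim b) == - d (sdim c) + 1].
Proof. by rewrite /P is_path2 w3_0 w3_1 w3_2 /Qarr -!andbA. Qed.

Definition pb (a c : S) := [pick b | P (word3 a b c)].
Definition star (w : W) := word3 (w ord0) (odflt (w (inord 1)) (pb (w ord0) (w ord_max))) (w ord_max).

Lemma star_P (w : W) : P w -> P (star w).
Proof.
rewrite /star /pb; case: pickP => [b Hb|] //= Hw; by rewrite -word3_eta.
Qed.

Lemma star_same (w w' : W) : P w -> w ord0 = w' ord0 -> w ord_max = w' ord_max -> star w = star w'.
Proof.
rewrite /star /pb => Hw <- <-; case: pickP => [b Hb|N] //=.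
by move: (N (w (inord 1))); rewrite -word3_eta Hw.
Qed.

Lemma star_idem (w : W) : P w -> star (star w) = star w.
Proof. move=> Hw; apply: star_same; [exact: star_P | by rewrite /star w3_0 | by rewrite /star w3_2]. Qed.

Lemma rev_w0 (w : W) : rev_word w ord0 = w ord_max.
Proof. by rewrite [w in rev_word w]word3_eta rev_word3 w3_0. Qed.
Lemma rev_w2 (w : W) : rev_word w ord_max = w ord0.
Proof. by rewrite [w in rev_word w]word3_eta rev_word3 w3_2. Qed.
Lemma rev_w1 (w : W) : rev_word w (inord 1) = w (inord 1).
Proof. by rewrite [w in rev_word w]word3_eta rev_word3 w3_1. Qed.

Lemma P_eta (w : W) : P w = P (word3 (w ord0) (w (inord 1)) (w ord_max)).
Proof. by rewrite -word3_eta. Qed.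

Lemma decomp1 (y : deg F S 2) : in_T (Qarr e) y ->
  (forall v, P v -> \sum_(w | P w && (w ord0 == v ord0) && (w ord_max == v ord_max)) y w = 0) ->
  forall v, y v = \sum_(w | P w) y w * ((v == w)%:R - (v == star w)%:R).
Proof.
move=> HT Hz v.
rewrite (eq_bigr (fun w => y w * (if v == w then 1 else 0) - y w * (if v == star w then 1 else 0))); last first.
  by move=> w _; rewrite mulrBr; case: (v == w); case: (v == star w).
rewrite sumrB !sum_ind.
case Pv: (P v).
- rewrite (eq_bigl (fun w => w == v)) ?big_pred1_eq; last first.
    by move=> w; rewrite eq_sym; case: eqP => [->|]; rewrite ?Pv ?andbF.
  case Sv: (v == star v).
  + rewrite (eq_bigl (fun w => P w && (w ord0 == v ord0) && (w ord_max == v ord_max))) ?Hz ?subr0 //.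
    move=> w; apply/andP/andP => [[Pw /eqP ->]| [/andP [Pw /eqP E0] /eqP E2]].
      by rewrite Pw /star w3_0 w3_2 !eqxx.
    by split => //; rewrite (eqP Sv) (star_same Pv (esym E0) (esym E2)).
  + rewrite big_pred0 ?subr0 // => w; apply/andP => [[Pw /eqP E]].
    by move/negbT: Sv; rewrite E star_idem // eqxx.
- rewrite HT; last by move: Pv; rewrite /P => ->.
  rewrite big_pred0; last first.
    by move=> w; apply/andP => [[Pw /eqP E]]; move: Pv; rewrite E Pw.
  rewrite big_pred0 ?subr0 // => w; apply/andP => [[Pw /eqP E]].
  by move: Pv; rewrite E (star_P Pw).
Qed.

Definition Acond (w v : W) := [&& v ord0 == w ord0, v ord_max == w ord_max,
  - d (sdim (v (inord 1))) == - d (sdim (w ord0)) - 1,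
  face_rel (w ord0) (v (inord 1)) & face_rel (v (inord 1)) (w ord_max)].

Lemma Acond_P (w v : W) : P w -> Acond w v = [&& v ord0 == w ord0, v ord_max == w ord_max & P v].
Proof.
move=> Pw; rewrite /Acond; case: eqP => E0 //=; case: eqP => E2 //=.
rewrite P_eta P3 E0 E2.
move: Pw; rewrite P_eta P3 => /and4P [_ /eqP h1 _ /eqP h2].
have -> : (- d (sdim (v (inord 1))) == - d (sdim (w ord0)) - 1) =
          (- d (sdim (w ord0)) == - d (sdim (v (inord 1))) + 1) by apply/eqP/eqP; lia.
have -> : (- d (sdim (v (inord 1))) == - d (sdim (w ord_max)) + 1) =
          (- d (sdim (w ord0)) == - d (sdim (v (inord 1))) + 1) by apply/eqP/eqP; lia.
by case: (_ == _); case: (face_rel (w ord0) _); case: (face_rel _ (w ord_max)).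
Qed.

Lemma decomp2 (y : deg F S 2) : in_T (Qarr e) y ->
  (forall v, P v -> y v = y (star v)) ->
  forall v, y v = \sum_(w | P w && (w == star w)) y w * (if Acond w v then 1 else 0).
Proof.
move=> HT Hc v; rewrite sum_ind; case Pv: (P v).
- rewrite (eq_bigl (fun w => w == star v)) ?big_pred1_eq -?Hc // => w.
  apply/idP/idP => [/andP [/andP [Pw /eqP Ew] A] | /eqP ->].
    move: A; rewrite Acond_P // Pv andbT => /andP [/eqP E0 /eqP E2].
    by rewrite Ew (star_same Pw (esym E0) (esym E2)).
  by rewrite star_P // star_idem // eqxx Acond_P ?star_P // Pv /star w3_0 w3_2 !eqxx.
- rewrite HT; last by move: Pv; rewrite /P => ->.
  rewrite big_pred0 // => w; apply/andP => [[/andP [Pw _] A]].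
  by move: A; rewrite Acond_P // Pv !andbF.
Qed.

End Cx.

Lemma ar1 (x y z : int) : x = y + 1 -> y = z + 1 -> z = x - 1 - 1.
Proof. lia. Qed.

Lemma ar2 (x y k : int) : x = k + 1 -> y = k -> x = y + 1.
Proof. lia. Qed.
Lemma ar3 (y z k : int) : y = k -> z = k - 1 -> y = z + 1.
Proof. lia. Qed.

Unset Implicit Arguments.

Theorem lemma4p2p3 (F : fieldType) (hF : [pchar F] =i pred0)
  (V : finType) (X : {set {set V}})
  (hX : simplicial_complex X) (hconn : connected_complex X)
  (d : nat -> int) (hd : cellular_perversity d) :
  qiso (qdual (A_alg F X d)) (B_alg F X (fun n => - d n)) /\
  qiso (qdual (B_alg F X d)) (A_alg F X (fun n => - d n)).
Proof.
have Earr : forall a b : simplex X, Qarr d b a = Qarr (fun n => - d n) a b.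
  by move=> a b; apply: Qarr_dual.
split.
- apply: qiso_id => //.
  + apply: ideal_transfer => // y [HT Horth].
    have HT' := in_T_dual HT.
    have Hz : forall v, P d v -> \sum_(w | P d w && (w ord0 == v ord0) && (w ord_max == v ord_max)) y w = 0.
      move=> v Pv.
      move: (Pv); rewrite P_eta P3 => /and4P [_ /eqP h1 _ /eqP h2].
      pose r : deg F (simplex X) 2 := [ffun w : word (simplex X) 2 => if [&& w ord0 == v ord_max, w ord_max == v ord0,
         d (sdim (w (inord 1))) == d (sdim (v ord_max)) - 1,
         face_rel (v ord_max) (w (inord 1)) & face_rel (w (inord 1)) (v ord0)] then 1 else 0].
      have Hr : qrel (A_alg F X d) r.
        exists (v ord_max), (v ord0), (d (sdim (v ord_max)) - 1); split.
        - by rewrite subrK.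
        - lia.
        - by move=> w; rewrite ffunE.
      have := Horth r Hr.
      rewrite reindex_rev; under eq_bigr => w _ do rewrite ffunE.
      rewrite (sum_ind xpredT) => H; rewrite -[X in _ = X]H; apply: eq_bigl => w; rewrite /=.
      rewrite rev_w0 rev_w1 rev_w2.
      case: (eqP : reflect (w ord0 = v ord0) _) => E0; last by rewrite andbF /= andbF.
      case: (eqP : reflect (w ord_max = v ord_max) _) => E2; last by rewrite andbF.
      rewrite andbT /= P_eta P3 E0 E2 (face_sym (v ord_max)) (face_sym _ (v ord0)).
      have -> : (d (sdim (w (inord 1))) == d (sdim (v ord_max)) - 1) =
        (- d (sdim (v ord0)) == - d (sdim (w (inord 1))) + 1) by apply/eqP/eqP; lia.
      have -> : (- d (sdim (w (inord 1))) == - d (sdim (v ord_max)) + 1) =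
        (- d (sdim (v ord0)) == - d (sdim (w (inord 1))) + 1) by apply/eqP/eqP; lia.
      by case: (_ == _); case: (face_rel (v ord0) _); case: (face_rel _ (v ord_max)).
    exists [seq (y w, [ffun v => (v == w)%:R - (v == star d w)%:R]) | w <- enum [pred w | P d w]].
    split.
    * move=> p /mapP [w]; rewrite mem_enum inE => Pw ->; cbn [qrel B_alg snd].
      move: (Pw); rewrite P_eta P3 => /and4P [f1 /eqP h1 f2 /eqP h2].
      have := star_P Pw; rewrite /star P3 => /and4P [f3 /eqP h3 f4 /eqP h4].
      exists (w ord0), (w (inord 1)), (odflt (w (inord 1)) (pb d (w ord0) (w ord_max))), (w ord_max),
        (- d (sdim (w ord0)) - 1); split; cbv beta.
      - by rewrite subrK.
      - by split; [rewrite h1 addrK | rewrite h3 addrK].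
      - exact: ar1 h1 h2.
      - by rewrite f1 f2 f3 f4.
      - by move=> v; rewrite ffunE -word3_eta.
    * move=> v; rewrite big_map big_enum /= {1}(decomp1 HT' Hz v).
      by apply: eq_big => [w|w _]; rewrite ?inE ?ffunE.
  + apply: ideal_transfer => [a b|r Hr]; first by rewrite /= Earr.
    exists [:: (1, r)]; split; last by move=> w; rewrite big_seq1 mul1r.
    move=> p; rewrite inE => /eqP ->; cbn [qrel qdual B_alg A_alg snd].
    move: Hr => [a [b1 [b2 [c [k [ha [hb1 hb2] hc /and4P [f1 f2 f3 f4] Hr]]]]]].
    move: ha hb1 hb2 hc; cbv beta => ha hb1 hb2 hc.
    split.
    * apply: in_T_dual' => w Hw; have Hw' : ~~ P d w := Hw.
      have P1 : P d (word3 a b1 c) by rewrite P3 f1 f2 /=; apply/andP; split; apply/eqP; lia.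
      have P2 : P d (word3 a b2 c) by rewrite P3 f3 f4 /=; apply/andP; split; apply/eqP; lia.
      rewrite Hr; case: eqP => [E|_]; first by rewrite E P1 in Hw'.
      case: eqP => [E|_]; first by rewrite E P2 in Hw'.
      by rewrite subrr.
    * move=> r' Hr'; rewrite reindex_rev.
      under eq_bigr => w _ do rewrite Hr mulrC.
      rewrite sum_deltaB !rev_word3; apply/eqP; rewrite subr_eq0; apply/eqP.
      apply: (A_rel_mid Hr'); rewrite 1?face_sym //; lia.
- apply: qiso_id => //.
  + apply: ideal_transfer => // y [HT Horth].
    have HT' := in_T_dual HT.
    have Hc : forall v, P d v -> y v = y (star d v).
      move=> v Pv.
      move: (Pv); rewrite P_eta P3 => /and4P [f1 /eqP h1 f2 /eqP h2].
      have := star_P Pv; rewrite /star P3 => /and4P [f3 /eqP h3 f4 /eqP h4].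
      set b2 := odflt _ _ in f3 f4 h3 h4 *.
      pose r : deg F (simplex X) 2 := [ffun w : word (simplex X) 2 => (w == word3 (v ord_max) (v (inord 1)) (v ord0))%:R
                         - (w == word3 (v ord_max) b2 (v ord0))%:R].
      have Hr : qrel (B_alg F X d) r.
        exists (v ord_max), (v (inord 1)), b2, (v ord0), (d (sdim (v ord_max)) - 1); split.
        - by rewrite subrK.
        - split; lia.
        - lia.
        - by rewrite (face_sym (v ord_max)) f2 (face_sym _ (v ord0)) f1 (face_sym (v ord_max)) f4 (face_sym _ (v ord0)) f3.
        - by move=> w; rewrite ffunE.
      have := Horth r Hr.
      under eq_bigr => w _ do rewrite ffunE.
      rewrite sum_deltaB !rev_word3 -word3_eta => /eqP; rewrite subr_eq0 => /eqP.
      by rewrite /star.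
    exists [seq (y w, [ffun v => if Acond d w v then 1 else 0]) | w <- enum [pred w | P d w && (w == star d w)]].
    split.
    * move=> p /mapP [w]; rewrite mem_enum inE => /andP [Pw _] ->; cbn [qrel A_alg snd].
      move: (Pw); rewrite P_eta P3 => /and4P [f1 /eqP h1 f2 /eqP h2].
      exists (w ord0), (w ord_max), (- d (sdim (w ord0)) - 1); split; cbv beta.
      - by rewrite subrK.
      - exact: ar1 h1 h2.
      - by move=> v; rewrite ffunE.
    * move=> v; rewrite big_map big_enum /= {1}(decomp2 HT' Hc v).
      by apply: eq_big => [w|w _]; rewrite ?inE ?ffunE.
  + apply: ideal_transfer => [a b|r Hr]; first by rewrite /= Earr.
    exists [:: (1, r)]; split; last by move=> w; rewrite big_seq1 mul1r.
    move=> p; rewrite inE => /eqP ->; cbn [qrel qdual B_alg A_alg snd].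
    split.
    * apply: in_T_dual' => w Hw; have Hw' : ~~ P d w := Hw.
      move: (Hr) => [a [c [k [ha hc Hr']]]]; move: ha hc; cbv beta => ha hc.
      rewrite Hr'; case: ifP => // /and5P [/eqP E0 /eqP E2 /eqP E1 g1 g2].
      move: Hw'; rewrite P_eta P3 E0 E2 g1 g2 /=.
      move: E1; cbv beta => E1.
      have -> : (- d (sdim a) == - d (sdim (w (inord 1))) + 1) by apply/eqP; apply: ar2 ha E1.
      have -> : (- d (sdim (w (inord 1))) == - d (sdim c) + 1) by apply/eqP; apply: ar3 E1 hc.
      by [].
    * move=> r' [a' [b1 [b2 [c' [k' [ha' [hb1 hb2] hc' /and4P [f1 f2 f3 f4] Hr']]]]]].
      under eq_bigr => w _ do rewrite Hr'.
      rewrite sum_deltaB !rev_word3; apply/eqP; rewrite subr_eq0; apply/eqP.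
      apply: (A_rel_mid Hr); rewrite 1?face_sym //=; lia.
Qed.
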